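(* Let $\delta>0$ and consider the boundary value problem $$\phi''(x)-\delta\, e^{-\phi(x)}=0,\quad 0<x<1,\qquad \phi'(0)=0,\qquad \phi(1)=0,$$ for a twice continuously differentiable function $\phi:[0,1]\to\mathbb{R}$. Let $\delta_c\approx 0.878$ be the unique positive number satisfying $$1=\sqrt{\frac{\delta_c}{2}}\,\sinh\!\left(\sqrt{\frac{\delta_c+2}{2}}\right).$$ Then the problem has exactly two solutions if $0<\delta<\delta_c$, exactly one solution if $\delta=\delta_c$, and no solution if $\delta>\delta_c$. Every solution has the form $\phi(x)=\phi_0+2\ln\cosh\!\left(\sqrt{\tfrac{\delta}{2}}\,e^{-\phi_0/2}x\right)$, where $\phi_0=\phi(0)$ satisfies $e^{-\phi_0/2}=\cosh\!\left(\sqrt{\tfrac{\delta}{2}}\,e^{-\phi_0/2}\right)$.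
   Context: This is the non-dimensionalized steady-state equation for the liquid (ionic) potential in a one-dimensional molten carbonate fuel cell cathode, with the solid potential, porosity and gas concentrations taken constant, so that $\delta=\frac{\nu L^2}{\sigma_l\epsilon_l^b}\frac{RT}{n\alpha F}i_0 c_{O_2}c_{CO_2}e^{\bar\phi_s}$ is inversely proportional to the liquid conductivity $\sigma_l$; the condition $\phi'(0)=0$ is a no-flux condition and $\phi(1)=0$ a Dirichlet condition. Consequently, for sufficiently small liquid conductivity no steady state exists. *)

(* Defs.v *)
From Stdlib Require Import Reals.
Open Scope R_scope.

Definition I01 (y : R) : Prop := 0 <= y <= 1.

Definition deriv01 (f : R -> R) (x l : R) : Prop :=
  limit1_in (fun y => (f y - f x) / (y - x)) (fun y => I01 y /\ y <> x) l x.

(* phi : [0,1] -> R (values outside [0,1] irrelevant) is a C^2 solution of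
   phi'' - delta e^{-phi} = 0 on (0,1), phi'(0) = 0, phi(1) = 0.
   phi1, phi2 are its first and second derivatives on [0,1]. *)
Definition bvp_solution (delta : R) (phi : R -> R) : Prop :=
  exists phi1 phi2 : R -> R,
    (forall x, I01 x ->
       deriv01 phi x (phi1 x) /\ deriv01 phi1 x (phi2 x) /\
       limit1_in phi2 I01 (phi2 x) x) /\
    (forall x, 0 < x < 1 -> phi2 x - delta * exp (- phi x) = 0) /\
    phi1 0 = 0 /\ phi 1 = 0.

Definition eq01 (f g : R -> R) : Prop := forall x, I01 x -> f x = g x.

Definition exactly_two_solutions (delta : R) : Prop :=
  exists f g, bvp_solution delta f /\ bvp_solution delta g /\ ~ eq01 f g /\
    forall h, bvp_solution delta h -> eq01 h f \/ eq01 h g.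

Definition exactly_one_solution (delta : R) : Prop :=
  exists f, bvp_solution delta f /\
    forall h, bvp_solution delta h -> eq01 h f.

Definition no_solution (delta : R) : Prop :=
  forall h, ~ bvp_solution delta h.

(* Main.v *)
Require Import Defs.
From Stdlib Require Import Reals Lra.
From Coquelicot Require Import Coquelicot.
Open Scope R_scope.

Definition clamp (y : R) : R := Rmax 0 (Rmin 1 y).

Lemma clamp_I01 y : I01 (clamp y).
Proof.
  unfold clamp, I01, Rmax, Rmin.
  destruct (Rle_dec 1 y); destruct (Rle_dec 0 _); lra.
Qed.

Lemma clamp_id x : I01 x -> clamp x = x.
Proof.
  unfold clamp, I01, Rmax, Rmin; intros.
  destruct (Rle_dec 1 x); destruct (Rle_dec 0 _); lra.
Qed.

Lemma clamp_dist x y : I01 x -> Rabs (clamp y - x) <= Rabs (y - x).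
Proof.
  unfold clamp, I01, Rmax, Rmin; intros.
  destruct (Rle_dec 1 y); destruct (Rle_dec 0 _);
  unfold Rabs; repeat destruct Rcase_abs; lra.
Qed.

Lemma deriv01_cont f x l : I01 x -> deriv01 f x l ->
  forall eps, 0 < eps -> exists d, 0 < d /\
    forall y, I01 y -> Rabs (y - x) < d -> Rabs (f y - f x) < eps.
Proof.
  intros Hx H eps Heps.
  destruct (H 1 Rlt_0_1) as [alp [Halp Hal]].
  exists (Rmin alp (eps / (Rabs l + 1))). split.
  { apply Rmin_pos; auto. apply Rdiv_lt_0_compat; auto. pose proof (Rabs_pos l); lra. }
  intros y Hy Hd.
  destruct (Req_dec y x) as [->|Hne].
  { rewrite Rminus_diag, Rabs_R0; auto. }
  assert (Hq := Hal y (conj (conj Hy Hne) (Rlt_le_trans _ _ _ Hd (Rmin_l _ _)))).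
  simpl in Hq. unfold R_dist in Hq.
  assert (Hd2 := Rlt_le_trans _ _ _ Hd (Rmin_r _ _)).
  replace (f y - f x) with ((f y - f x) / (y - x) * (y - x)) by (field; lra).
  rewrite Rabs_mult.
  assert (Hb : Rabs ((f y - f x) / (y - x)) <= Rabs l + 1).
  { pose proof (Rabs_triang_inv ((f y - f x) / (y - x)) l). lra. }
  assert (Hp : 0 < Rabs l + 1) by (pose proof (Rabs_pos l); lra).
  apply Rle_lt_trans with ((Rabs l + 1) * Rabs (y - x)).
  { apply Rmult_le_compat_r; auto. apply Rabs_pos. }
  apply Rmult_lt_reg_l with (/ (Rabs l + 1)). apply Rinv_0_lt_compat; auto.
  rewrite <- Rmult_assoc, Rinv_l by lra. rewrite Rmult_1_l.
  unfold Rdiv in Hd2. lra.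
Qed.

Lemma cont_clamp f x : I01 x ->
  (forall eps, 0 < eps -> exists d, 0 < d /\
    forall y, I01 y -> Rabs (y - x) < d -> Rabs (f y - f x) < eps) ->
  continuity_pt (fun y => f (clamp y)) x.
Proof.
  intros Hx H eps Heps. destruct (H eps Heps) as [d [Hd Hf]].
  exists d; split; auto. intros y [_ Hy]. simpl in *. unfold R_dist in *.
  rewrite (clamp_id x Hx). apply Hf. apply clamp_I01.
  pose proof (clamp_dist x y Hx). lra.
Qed.

Lemma deriv01_interior f x l : 0 < x < 1 -> deriv01 f x l ->
  is_derive (fun y => f (clamp y)) x l.
Proof.
  intros Hx H. apply is_derive_Reals. intros eps Heps.
  destruct (H eps Heps) as [alp [Halp Hal]].
  assert (Hp : 0 < Rmin alp (Rmin x (1 - x))).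
  { repeat apply Rmin_pos; lra. }
  exists (mkposreal _ Hp). intros h Hh Hlt. simpl in Hlt.
  assert (h1 := Rmin_l alp (Rmin x (1 - x))).
  assert (h2 := Rmin_r alp (Rmin x (1 - x))).
  assert (h3 := Rmin_l x (1 - x)). assert (h4 := Rmin_r x (1 - x)).
  assert (Hy : I01 (x + h)).
  { unfold I01. unfold Rabs in Hlt; destruct Rcase_abs; lra. }
  rewrite (clamp_id _ Hy), (clamp_id x) by (unfold I01; lra).
  assert (Hq := Hal (x + h)). simpl in Hq. unfold R_dist in Hq.
  replace (x + h - x) with h in Hq by ring. apply Hq. split; [split|]; auto; lra.
Qed.

Lemma const01 F : (forall x, 0 < x < 1 -> is_derive F x 0) ->
  (forall x, I01 x -> continuity_pt F x) -> forall x, I01 x -> F x = F 0.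
Proof.
  intros Hd Hc x Hx. destruct (Req_dec x 0) as [->|Hne]; auto.
  unfold I01 in Hx.
  assert (Hmin : Rmin 0 x = 0) by (apply Rmin_left; lra).
  assert (Hmax : Rmax 0 x = x) by (apply Rmax_right; lra).
  destruct (MVT_gen F 0 x (fun _ => 0)) as [c [_ Hc']].
  - rewrite Hmin, Hmax. intros y Hy. apply Hd. lra.
  - rewrite Hmin, Hmax. intros y Hy. apply Hc. unfold I01; lra.
  - lra.
Qed.

Lemma dpl_deriv01 f x l : derivable_pt_lim f x l -> deriv01 f x l.
Proof.
  intros H eps Heps. destruct (H eps Heps) as [d Hd].
  exists d. split; [apply cond_pos|]. intros y [[_ Hne] Hy]. simpl in *. unfold R_dist in *.
  replace y with (x + (y - x)) by ring.
  replace (x + (y - x) - x) with (y - x) by ring.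
  apply Hd; auto. lra.
Qed.

Lemma cont_limit f x : continuity_pt f x -> limit1_in f I01 (f x) x.
Proof.
  intros H eps Heps. destruct (H eps Heps) as [d [Hd Hf]].
  exists d; split; auto. intros y [_ Hy].
  destruct (Req_dec y x) as [->|Hne].
  - simpl. unfold R_dist. rewrite Rminus_diag, Rabs_R0; auto.
  - apply Hf. split; auto. split; auto. exact I.
Qed.

Lemma dE (f g : R -> R) x df dg d : is_derive f x df -> is_derive g x dg ->
  is_derive (fun y => g y ^ 2 + 2 * d * exp (- f y)) x
    (2 * g x * dg + 2 * d * (exp (- f x) * (- df))).
Proof.
  intros Hf Hg.
  auto_derive.
  - split; [exists dg; auto | split; [exists df; auto | auto]].
  - replace (Derive (fun x0 : R => f x0) x) with df by (symmetry; apply is_derive_unique; auto).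
    replace (Derive (fun x0 : R => g x0) x) with dg by (symmetry; apply is_derive_unique; auto). ring.
Qed.

Lemma du (f g : R -> R) x df dg a b : is_derive f x df -> is_derive g x dg ->
  is_derive (fun y => (g y / 2 + a) * exp (f y / 2 + b * y)) x
    (dg / 2 * exp (f x / 2 + b * x) + (g x / 2 + a) * (exp (f x / 2 + b * x) * (df / 2 + b))).
Proof.
  intros Hf Hg.
  auto_derive.
  - split; [exists dg; auto | split; [exists df; auto | auto]].
  - replace (Derive (fun x0 : R => f x0) x) with df by (symmetry; apply is_derive_unique; auto).
    replace (Derive (fun x0 : R => g x0) x) with dg by (symmetry; apply is_derive_unique; auto). unfold Rdiv. ring.
Qed.

Lemma cE (f g : R -> R) x d : continuity_pt f x -> continuity_pt g x ->
  continuity_pt (fun y => g y ^ 2 + 2 * d * exp (- f y)) x.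
Proof.
  intros Hf Hg. apply continuity_pt_filterlim. apply continuity_pt_filterlim in Hf, Hg.
  apply (continuous_plus (fun y => g y ^ 2) (fun y => 2 * d * exp (- f y))).
  - apply (continuous_mult g (fun y => g y ^ 1)); auto.
    apply (continuous_mult g (fun y => 1)); auto. apply continuous_const.
  - apply (continuous_mult (fun y => 2 * d) (fun y => exp (- f y))).
    apply continuous_const. apply continuous_exp_comp.
    apply (continuous_opp f); auto.
Qed.

Lemma cu (f g : R -> R) x a b : continuity_pt f x -> continuity_pt g x ->
  continuity_pt (fun y => (g y / 2 + a) * exp (f y / 2 + b * y)) x.
Proof.
  intros Hf Hg. apply continuity_pt_filterlim. apply continuity_pt_filterlim in Hf, Hg.
  apply (continuous_mult (fun y => g y / 2 + a) (fun y => exp (f y / 2 + b * y))).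
  - apply (continuous_plus (fun y => g y / 2) (fun y => a)).
    apply (continuous_mult g (fun y => / 2)); auto. apply continuous_const.
    apply continuous_const.
  - apply continuous_exp_comp.
    apply (continuous_plus (fun y => f y / 2) (fun y => b * y)).
    apply (continuous_mult f (fun y => / 2)); auto. apply continuous_const.
    apply (continuous_mult (fun y => b) (fun y => y)). apply continuous_const. apply continuous_id.
Qed.

Lemma solution_form d phi : 0 < d -> bvp_solution d phi ->
  forall x, I01 x ->
    phi x = phi 0 + 2 * ln (cosh (sqrt (d / 2) * exp (- phi 0 / 2) * x)).
Proof.
  intros Hd [phi1 [phi2 [Hreg [Hode [H10 H1]]]]].
  set (P := fun y => phi (clamp y)).
  set (P1 := fun y => phi1 (clamp y)).
  set (P2 := fun y => phi2 (clamp y)).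
  assert (I0 : I01 0) by (unfold I01; lra).
  assert (HP0 : P 0 = phi 0) by (unfold P; rewrite clamp_id; auto).
  assert (HP10 : P1 0 = 0) by (unfold P1; rewrite clamp_id; auto).
  assert (HdP : forall x, 0 < x < 1 -> is_derive P x (P1 x)).
  { intros x Hx. unfold P1. rewrite clamp_id by (unfold I01; lra).
    apply deriv01_interior; auto. apply (Hreg x). unfold I01; lra. }
  assert (HdP1 : forall x, 0 < x < 1 -> is_derive P1 x (P2 x)).
  { intros x Hx. unfold P2. rewrite clamp_id by (unfold I01; lra).
    apply deriv01_interior; auto. apply (Hreg x). unfold I01; lra. }
  assert (HcP : forall x, I01 x -> continuity_pt P x).
  { intros x Hx. apply cont_clamp; auto. apply (deriv01_cont _ _ (phi1 x)); auto.
    apply Hreg; auto. }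
  assert (HcP1 : forall x, I01 x -> continuity_pt P1 x).
  { intros x Hx. apply cont_clamp; auto. apply (deriv01_cont _ _ (phi2 x)); auto.
    apply Hreg; auto. }
  assert (HodeP : forall x, 0 < x < 1 -> P2 x = d * exp (- P x)).
  { intros x Hx. unfold P2, P. rewrite clamp_id by (unfold I01; lra).
    specialize (Hode x Hx). lra. }
  assert (HE : forall x, I01 x -> P1 x ^ 2 + 2 * d * exp (- P x) = 2 * d * exp (- phi 0)).
  { intros x Hx.
    rewrite (const01 (fun y => P1 y ^ 2 + 2 * d * exp (- P y))); auto.
    - rewrite HP10, HP0. ring.
    - intros y Hy. assert (Hdv := dE P P1 y (P1 y) (P2 y) d (HdP y Hy) (HdP1 y Hy)).
      replace (2 * P1 y * P2 y + 2 * d * (exp (- P y) * (- P1 y))) with 0 in Hdv; auto.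
      rewrite HodeP by auto. ring.
    - intros y Hy. apply cE; auto. }
  set (a := sqrt (d / 2) * exp (- phi 0 / 2)).
  assert (Ha : 0 < a).
  { unfold a. apply Rmult_lt_0_compat. apply sqrt_lt_R0. lra. apply exp_pos. }
  assert (Haa : a * a = d / 2 * exp (- phi 0)).
  { unfold a. replace (sqrt (d / 2) * exp (- phi 0 / 2) * (sqrt (d / 2) * exp (- phi 0 / 2)))
      with ((sqrt (d / 2) * sqrt (d / 2)) * (exp (- phi 0 / 2) * exp (- phi 0 / 2))) by ring.
    rewrite sqrt_sqrt by lra. rewrite <- exp_plus. f_equal. f_equal. field. }
  assert (Hz : forall x, 0 < x < 1 -> P2 x / 2 + P1 x ^ 2 / 4 - a * a = 0).
  { intros x Hx. rewrite HodeP by auto.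
    assert (Hx' : I01 x) by (unfold I01; lra).
    specialize (HE x Hx'). rewrite Haa. lra. }
  assert (Hu : forall b s, (b = a \/ b = - a) -> s = - b -> forall x, I01 x ->
     (P1 x / 2 + b) * exp (P x / 2 + s * x) = b * exp (phi 0 / 2)).
  { intros b s Hb Hs x Hx.
    rewrite (const01 (fun y => (P1 y / 2 + b) * exp (P y / 2 + s * y))); auto.
    - rewrite HP10, HP0. rewrite Rmult_0_r, Rplus_0_r. set (e := exp (phi 0 / 2)). field.
    - intros y Hy. assert (Hdv := du P P1 y (P1 y) (P2 y) b s (HdP y Hy) (HdP1 y Hy)).
      assert (Hval : P2 y / 2 * exp (P y / 2 + s * y) + (P1 y / 2 + b) * (exp (P y / 2 + s * y) * (P1 y / 2 + s)) = 0).
      { specialize (Hz y Hy).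
        transitivity (exp (P y / 2 + s * y) * (P2 y / 2 + P1 y ^ 2 / 4 - b * b)).
        { set (e := exp (P y / 2 + s * y)). rewrite Hs. field. }
        replace (b * b) with (a * a) by (destruct Hb; subst b; ring).
        rewrite Hz. ring. }
      rewrite Hval in Hdv. exact Hdv.
    - intros y Hy. apply cu; auto. }
  intros x Hx.
  assert (U := Hu a (- a) (or_introl eq_refl) eq_refl x Hx).
  assert (V := Hu (- a) a (or_intror eq_refl) (eq_sym (Ropp_involutive a)) x Hx).
  rewrite exp_plus in U, V.
  set (X := exp (P x / 2)) in U, V.
  set (E := exp (a * x)) in V.
  replace (- a * x) with (- (a * x)) in U by ring.
  rewrite exp_Ropp in U. fold E in U.
  set (w := exp (phi 0 / 2)) in U, V.
  assert (HE0 : 0 < E) by apply exp_pos.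
  assert (HX : X = w * cosh (a * x)).
  { unfold cosh. fold E. rewrite exp_Ropp. fold E.
    set (p := P1 x / 2) in U, V.
    assert (U' : (p + a) * X = a * w * E) by (rewrite <- U; field; lra).
    assert (V' : (p - a) * X = - a * w * / E) by (rewrite <- V; field; lra).
    apply Rmult_eq_reg_l with (2 * a); [|lra].
    replace (2 * a * X) with ((p + a) * X - (p - a) * X) by ring.
    rewrite U', V'. field. lra. }
  assert (HPx : P x = phi x) by (unfold P; rewrite clamp_id; auto).
  rewrite <- HPx.
  assert (Hc : 0 < cosh (a * x)).
  { unfold cosh. pose proof (exp_pos (a * x)); pose proof (exp_pos (- (a * x))); lra. }
  replace (P x) with (2 * ln X).
  - rewrite HX. rewrite ln_mult by (auto; apply exp_pos). unfold w. rewrite ln_exp. unfold a. set (L := ln _). field.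
  - unfold X. rewrite ln_exp. field.
Qed.

Definition sol (d s : R) (x : R) : R := -2 * ln s + 2 * ln (cosh (sqrt (d / 2) * s * x)).

Definition f1 (k x : R) := 2 * k * (exp (k * x) - exp (- (k * x))) / (exp (k * x) + exp (- (k * x))).
Definition f2 (k x : R) := 8 * k ^ 2 * (exp (k * x) * exp (- (k * x))) / (exp (k * x) + exp (- (k * x))) ^ 2.

Lemma EFpos k x : 0 < exp (k * x) + exp (- (k * x)).
Proof. pose proof (exp_pos (k * x)); pose proof (exp_pos (- (k * x))); lra. Qed.

Lemma d_f0 k c x : is_derive (fun y => c + 2 * ln (cosh (k * y))) x (f1 k x).
Proof.
  unfold cosh, f1. pose proof (EFpos k x). auto_derive.
  - lra.
  - set (E := exp (k * x)). set (F := exp (- (k * x))). field. fold E F in H. lra.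
Qed.

Lemma d_f1 k x : is_derive (f1 k) x (f2 k x).
Proof.
  unfold f1, f2. pose proof (EFpos k x). auto_derive.
  - lra.
  - set (E := exp (k * x)). set (F := exp (- (k * x))). fold E F in H. field. lra.
Qed.

Lemma ex_f2 k x : ex_derive (f2 k) x.
Proof.
  unfold f2. pose proof (EFpos k x). auto_derive. rewrite Rmult_1_r. apply Rgt_not_eq. apply Rmult_lt_0_compat; lra.
Qed.

Lemma sol_ok d s : 0 < d -> 0 < s -> cosh (sqrt (d / 2) * s) = s -> bvp_solution d (sol d s).
Proof.
  intros Hd Hs Hr. set (k := sqrt (d / 2) * s).
  exists (f1 k), (f2 k). split; [|split; [|split]].
  - intros x Hx. split; [|split].
    + apply dpl_deriv01. apply is_derive_Reals.
      apply (is_derive_ext (fun y => -2 * ln s + 2 * ln (cosh (k * y)))).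
      { intros t. reflexivity. }
      apply d_f0.
    + apply dpl_deriv01. apply is_derive_Reals. apply d_f1.
    + apply cont_limit. apply continuity_pt_filterlim. exact (ex_derive_continuous (f2 k) x (ex_f2 k x)).
  - intros x Hx. unfold sol, f2. fold k.
    assert (HC : 0 < cosh (k * x)) by (unfold cosh; pose proof (EFpos k x); lra).
    replace (- (-2 * ln s + 2 * ln (cosh (k * x)))) with (ln (s * s) - ln (cosh (k * x) * cosh (k * x))).
    2:{ rewrite !ln_mult by auto. set (L1 := ln s). set (L2 := ln (cosh (k * x))). ring. }
    rewrite <- ln_div by (apply Rmult_lt_0_compat; auto).
    rewrite exp_ln by (apply Rdiv_lt_0_compat; apply Rmult_lt_0_compat; auto).
    assert (Hkk : k ^ 2 = d / 2 * (s * s)).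
    { unfold k. replace ((sqrt (d / 2) * s) ^ 2) with ((sqrt (d / 2) * sqrt (d / 2)) * (s * s)) by ring.
      rewrite sqrt_sqrt by lra. reflexivity. }
    rewrite Hkk. rewrite <- exp_plus. replace (k * x + - (k * x)) with 0 by ring. rewrite exp_0.
    unfold cosh. pose proof (EFpos k x).
    set (E := exp (k * x)). set (F := exp (- (k * x))). fold E F in H. field. lra.
  - unfold f1. rewrite Rmult_0_r, Ropp_0, exp_0. field.
  - unfold sol. rewrite Rmult_1_r, Hr. set (L := ln s). ring.
Qed.

Lemma tangent a t : t <> a -> cosh a + sinh a * (t - a) < cosh t.
Proof.
  intros Hne. unfold cosh, sinh.
  replace t with (a + (t - a)) at 2 3 by ring.
  set (e := t - a). assert (He : e <> 0) by (unfold e; lra).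
  rewrite exp_plus. replace (- (a + e)) with (- a + - e) by ring. rewrite exp_plus.
  pose proof (exp_ineq1 e He). assert (- e <> 0) by lra. pose proof (exp_ineq1 (- e) H0).
  pose proof (exp_pos a). pose proof (exp_pos (- a)).
  set (A := exp a) in *. set (B := exp (- a)) in *. set (X := exp e) in *. set (Y := exp (- e)) in *.
  assert (0 < A * (X - 1 - e)) by (apply Rmult_lt_0_compat; lra).
  assert (0 < B * (Y - 1 + e)) by (apply Rmult_lt_0_compat; lra).
  lra.
Qed.

Lemma tangent_le a t : cosh a + sinh a * (t - a) <= cosh t.
Proof.
  destruct (Req_dec t a) as [->|H]. right; ring. left; apply tangent; auto.
Qed.

Lemma cosh_pos t : 0 < cosh t.
Proof. unfold cosh. pose proof (exp_pos t); pose proof (exp_pos (- t)); lra. Qed.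

Lemma cosh_sinh2 t : cosh t * cosh t = 1 + sinh t * sinh t.
Proof.
  unfold cosh, sinh. assert (exp t * exp (- t) = 1) by (rewrite <- exp_plus; replace (t + - t) with 0 by ring; apply exp_0).
  set (A := exp t) in *. set (B := exp (- t)) in *. field_simplify. lra.
Qed.

Lemma sinh_lt a b : a < b -> sinh a < sinh b.
Proof.
  intros H. unfold sinh. pose proof (exp_increasing _ _ H).
  assert (- b < - a) by lra. pose proof (exp_increasing _ _ H1). lra.
Qed.

Lemma sinh_pos t : 0 < t -> 0 < sinh t.
Proof. intros. pose proof (sinh_lt 0 t H). unfold sinh in *. rewrite Ropp_0, exp_0 in H0. lra. Qed.

Lemma three c s1 s2 s3 : 0 < c -> cosh (c * s1) = s1 -> cosh (c * s2) = s2 ->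
  cosh (c * s3) = s3 -> s1 < s2 -> s2 < s3 -> False.
Proof.
  intros Hc H1 H2 H3 h12 h23.
  assert (T1 := tangent (c * s2) (c * s1) ltac:(nra)).
  assert (T3 := tangent (c * s2) (c * s3) ltac:(nra)).
  rewrite H1, H2 in T1. rewrite H2, H3 in T3.
  set (S := sinh (c * s2)) in *. nra.
Qed.

Lemma atmost2 c x y z : 0 < c -> cosh (c * x) = x -> cosh (c * y) = y ->
  cosh (c * z) = z -> x <> y -> y <> z -> x <> z -> False.
Proof.
  intros Hc Hx Hy Hz Hxy Hyz Hxz.
  destruct (Rtotal_order x y) as [a1|[a1|a1]]; [| contradiction |];
  destruct (Rtotal_order y z) as [a2|[a2|a2]]; try contradiction;
  destruct (Rtotal_order x z) as [a3|[a3|a3]]; try contradiction;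
  try lra;
  first [ (eapply (three c x y z); eauto; lra) | (eapply (three c x z y); eauto; lra)
        | (eapply (three c y x z); eauto; lra) | (eapply (three c y z x); eauto; lra)
        | (eapply (three c z x y); eauto; lra) | (eapply (three c z y x); eauto; lra) ].
Qed.

Lemma sqrt_sq2 d : 0 < d -> sqrt (d / 2) * sqrt (d / 2) = d / 2.
Proof. intros; apply sqrt_sqrt; lra. Qed.

Lemma t_sq d : 0 < d -> sqrt ((d + 2) / 2) * sqrt ((d + 2) / 2) = sqrt (d / 2) * sqrt (d / 2) + 1.
Proof. intros. rewrite !sqrt_sqrt by lra. field. Qed.

Lemma cont_G c k : continuity (fun s => k * s - k * cosh (c * s)).
Proof.
  intros x. apply continuity_pt_filterlim.
  apply (ex_derive_continuous (fun s => k * s - k * cosh (c * s)) x).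
  unfold cosh. auto_derive. auto.
Qed.

Definition isroot d s := 0 < s /\ cosh (sqrt (d / 2) * s) = s.


Lemma cc_cosh (dc : R) (Hdc : 0 < dc) (Hcrit : 1 = sqrt (dc / 2) * sinh (sqrt ((dc + 2) / 2))) : sqrt (dc / 2) * cosh (sqrt ((dc + 2) / 2)) = sqrt ((dc + 2) / 2).
Proof.
  set (cc := sqrt (dc / 2)). set (tc := sqrt ((dc + 2) / 2)).
  assert (Hsq := t_sq dc Hdc). fold cc tc in Hsq.
  assert (Hc : 0 < cc) by (apply sqrt_lt_R0; lra).
  assert (Ht : 0 < tc) by (apply sqrt_lt_R0; lra).
  assert (H2 := cosh_sinh2 tc). pose proof (cosh_pos tc).
  assert (E : (cc * cosh tc) * (cc * cosh tc) = tc * tc).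
  { replace ((cc * cosh tc) * (cc * cosh tc)) with (cc * cc * (cosh tc * cosh tc)) by ring.
    rewrite H2. fold cc tc in Hcrit. transitivity (cc * cc + (cc * sinh tc) * (cc * sinh tc)); [ring|].
    rewrite <- Hcrit. rewrite Hsq. ring. }
  assert (0 < cc * cosh tc) by (apply Rmult_lt_0_compat; auto). nra.
Qed.

Lemma crit_eq (dc : R) (Hdc : 0 < dc) (Hcrit : 1 = sqrt (dc / 2) * sinh (sqrt ((dc + 2) / 2))) : exists s, isroot dc s /\ forall s', isroot dc s' -> s' = s.
Proof.
  set (cc := sqrt (dc / 2)). set (tc := sqrt ((dc + 2) / 2)).
  assert (Hc : 0 < cc) by (apply sqrt_lt_R0; lra).
  assert (Ht : 0 < tc) by (apply sqrt_lt_R0; lra).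
  assert (HC := cc_cosh dc Hdc Hcrit). fold cc tc in HC, Hcrit.
  exists (tc / cc). split.
  - split. apply Rdiv_lt_0_compat; auto. fold cc. replace (cc * (tc / cc)) with tc by (field; lra).
    apply Rmult_eq_reg_l with cc; [|lra]. rewrite HC. field. lra.
  - intros s [Hs Hr]. fold cc in Hr.
    destruct (Req_dec (cc * s) tc) as [E|E].
    + rewrite <- E. field. lra.
    + exfalso. assert (T := tangent tc (cc * s) E). rewrite Hr in T.
      assert (cc * (cosh tc + sinh tc * (cc * s - tc)) < cc * s) by (apply Rmult_lt_compat_l; auto).
      replace (cc * (cosh tc + sinh tc * (cc * s - tc))) with (cc * cosh tc + (cc * sinh tc) * (cc * s - tc)) in H by ring.
      rewrite HC, <- Hcrit in H. lra.
Qed.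

Lemma crit_gt (dc : R) (Hdc : 0 < dc) (Hcrit : 1 = sqrt (dc / 2) * sinh (sqrt ((dc + 2) / 2))) d : dc < d -> forall s, ~ isroot d s.
Proof.
  intros Hd s [Hs Hr].
  set (cc := sqrt (dc / 2)). set (tc := sqrt ((dc + 2) / 2)). set (c := sqrt (d / 2)) in Hr.
  assert (Hc : 0 < cc) by (apply sqrt_lt_R0; lra).
  assert (Hcc : cc < c) by (apply sqrt_lt_1; lra).
  assert (HC := cc_cosh dc Hdc Hcrit). fold cc tc in HC, Hcrit.
  assert (T := tangent_le tc (c * s)). rewrite Hr in T.
  assert (cc * (cosh tc + sinh tc * (c * s - tc)) <= cc * s) by (apply Rmult_le_compat_l; lra).
  replace (cc * (cosh tc + sinh tc * (c * s - tc))) with (cc * cosh tc + (cc * sinh tc) * (c * s - tc)) in H by ring.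
  rewrite HC, <- Hcrit in H. nra.
Qed.

Lemma crit_lt (dc : R) (Hdc : 0 < dc) (Hcrit : 1 = sqrt (dc / 2) * sinh (sqrt ((dc + 2) / 2))) d : 0 < d -> d < dc -> exists s1 s2, isroot d s1 /\ isroot d s2 /\ s1 <> s2.
Proof.
  intros Hd0 Hd.
  set (cc := sqrt (dc / 2)). set (tc := sqrt ((dc + 2) / 2)).
  set (c := sqrt (d / 2)). set (t := sqrt ((d + 2) / 2)).
  assert (Hc0 : 0 < c) by (apply sqrt_lt_R0; lra).
  assert (Hcc : c < cc) by (apply sqrt_lt_1; lra).
  assert (Ht0 : 0 < t) by (apply sqrt_lt_R0; lra).
  assert (Htt : t < tc) by (apply sqrt_lt_1; lra).
  fold cc tc in Hcrit.
  assert (Hsh : c * sinh t < 1).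
  { rewrite Hcrit. pose proof (sinh_lt _ _ Htt). pose proof (sinh_pos t Ht0).
    apply Rle_lt_trans with (c * sinh tc). apply Rmult_le_compat_l; lra.
    apply Rmult_lt_compat_r; lra. }
  assert (Hsq := t_sq d Hd0). fold c t in Hsq.
  assert (Hct : c * cosh t < t).
  { pose proof (cosh_sinh2 t). pose proof (cosh_pos t). pose proof (sinh_pos t Ht0).
    assert ((c * cosh t) * (c * cosh t) < t * t).
    { replace ((c * cosh t) * (c * cosh t)) with (c * c + (c * sinh t) * (c * sinh t)) by
        (replace (c * c + c * sinh t * (c * sinh t)) with (c * c * (1 + sinh t * sinh t)) by ring; rewrite <- H; ring).
      rewrite Hsq. assert (0 < c * sinh t) by (apply Rmult_lt_0_compat; auto). nra. }
    assert (0 < c * cosh t) by (apply Rmult_lt_0_compat; auto). nra. }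
  set (s0 := t / c).
  assert (Hs0 : 0 < s0) by (apply Rdiv_lt_0_compat; auto).
  assert (Hneg : cosh (c * s0) < s0).
  { unfold s0. replace (c * (t / c)) with t by (field; lra).
    apply Rmult_lt_reg_l with c; auto. replace (c * (t / c)) with t by (field; lra). auto. }
  destruct (IVT (fun s => 1 * s - 1 * cosh (c * s)) 0 s0 (cont_G c 1) Hs0) as [z1 [Hz1 Ez1]].
  { simpl. replace (c * 0) with 0 by ring. rewrite cosh_0. lra. }
  { simpl. lra. }
  simpl in Ez1.
  set (S := s0 + 8 / (c * c) + 1).
  assert (HS : S < cosh (c * S)).
  { assert (HS0 : 0 < S) by (unfold S; assert (0 < 8 / (c * c)) by (apply Rdiv_lt_0_compat; nra); lra).
    set (y := c * S). assert (Hy : 0 < y) by (unfold y; nra).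
    assert (exp y = exp (y / 2) * exp (y / 2)) by (rewrite <- exp_plus; f_equal; field).
    pose proof (exp_ineq1_le (y / 2)). pose proof (exp_pos (- y)).
    assert (cosh y > exp y / 2) by (unfold cosh; lra).
    assert (exp y >= y * y / 4) by nra.
    assert (c * c * S >= 8).
    { assert (S > 8 / (c * c)) by (unfold S; lra).
      apply Rmult_gt_compat_l with (r := c * c) in H4; [|nra].
      replace (c * c * (8 / (c * c))) with 8 in H4 by (field; lra). lra. }
    unfold y in *. nra. }
  destruct (IVT (fun s => (-1) * s - (-1) * cosh (c * s)) s0 S (cont_G c (-1))) as [z2 [Hz2 Ez2]].
  { unfold S. assert (0 < 8 / (c * c)) by (apply Rdiv_lt_0_compat; nra). lra. }
  { simpl. lra. }
  { simpl. lra. }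
  simpl in Ez2.
  exists z1, z2. split; [|split].
  - split. destruct Hz1 as [[H|H] _]; auto. subst z1. replace (c * 0) with 0 in Ez1 by ring; rewrite cosh_0 in Ez1. lra.
    fold c. lra.
  - split. lra. fold c. lra.
  - intro E. subst z2. destruct Hz1 as [_ [H|H]]; [|subst; lra].
    destruct Hz2 as [[H'|H'] _]; [lra|]. subst. lra.
Qed.

Lemma form d phi : 0 < d -> bvp_solution d phi ->
  isroot d (exp (- phi 0 / 2)) /\ eq01 phi (sol d (exp (- phi 0 / 2))).
Proof.
  intros Hd Hs. assert (F := solution_form d phi Hd Hs).
  assert (H1 : phi 1 = 0) by (destruct Hs as [? [? [? [? [? ?]]]]]; auto).
  split.
  - split. apply exp_pos.
    assert (F1 := F 1 ltac:(unfold I01; lra)). rewrite H1, Rmult_1_r in F1.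
    set (C := cosh (sqrt (d / 2) * exp (- phi 0 / 2))) in *.
    assert (0 < C) by apply cosh_pos.
    rewrite <- (exp_ln C) by auto. f_equal. set (L := ln C) in *. set (p := phi 0) in *. field_simplify. lra.
  - intros x Hx. rewrite (F x Hx). unfold sol. rewrite ln_exp.
    set (L := ln _). set (p := phi 0). field.
Qed.

Lemma sol0 d s : sol d s 0 = -2 * ln s.
Proof. unfold sol. rewrite Rmult_0_r, cosh_0, ln_1. ring. Qed.

Theorem mainTheorem1 :
  forall delta_c : R,
    0 < delta_c ->
    1 = sqrt (delta_c / 2) * sinh (sqrt ((delta_c + 2) / 2)) ->
  forall delta : R, 0 < delta ->
    (delta < delta_c -> exactly_two_solutions delta) /\
    (delta = delta_c -> exactly_one_solution delta) /\
    (delta_c < delta -> no_solution delta) /\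
    (forall phi : R -> R, bvp_solution delta phi ->
       exp (- phi 0 / 2) = cosh (sqrt (delta / 2) * exp (- phi 0 / 2)) /\
       forall x, I01 x ->
         phi x = phi 0 + 2 * ln (cosh (sqrt (delta / 2) * exp (- phi 0 / 2) * x))).
Proof.
  intros dc Hdc Hcrit d Hd.
  assert (Hc : 0 < sqrt (d / 2)) by (apply sqrt_lt_R0; lra).
  split; [|split; [|split]].
  - intros Hlt. destruct (crit_lt dc Hdc Hcrit d Hd Hlt) as [s1 [s2 [[P1 R1] [[P2 R2] Hne]]]].
    exists (sol d s1), (sol d s2). split; [apply sol_ok; auto|]. split; [apply sol_ok; auto|]. split.
    + intros E. specialize (E 0 ltac:(unfold I01; lra)). rewrite !sol0 in E.
      apply Hne. apply ln_inv; auto. lra.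
    + intros h Hh. destruct (form d h Hd Hh) as [[Ps Rs] Eh].
      set (sh := exp (- h 0 / 2)) in *.
      destruct (Req_dec sh s1) as [E1|E1]; [left; rewrite <- E1; auto|].
      destruct (Req_dec sh s2) as [E2|E2]; [right; rewrite <- E2; auto|].
      exfalso. apply (atmost2 (sqrt (d / 2)) sh s1 s2); auto.
  - intros ->. destruct (crit_eq dc Hdc Hcrit) as [s [[Ps Rs] Hu]].
    exists (sol dc s). split; [apply sol_ok; auto|].
    intros h Hh. destruct (form dc h Hdc Hh) as [Rh Eh].
    rewrite <- (Hu _ Rh). auto.
  - intros Hgt h Hh. destruct (form d h Hd Hh) as [Rh _].
    exact (crit_gt dc Hdc Hcrit d Hgt _ Rh).
  - intros phi Hphi. split.
    + destruct (form d phi Hd Hphi) as [[_ R] _]. auto.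
    + apply solution_form; auto.
Qed.
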